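(* Let $q>1$, $0\le M_0<M$, let $u$ be a sufficiently smooth $L$-periodic solution of $u_t=-\alpha uu_x+\beta u_{xxx}$ on $[0,T]\times\mathbb{R}$, $r>\sup_{t,x}|u(t,x)|$. Assume $u^{(0)}_k=u(0,k\Delta x)$, that $u^{(0)},\dots,u^{(M_0+1)}$ are obtained successively as solutions of the scheme, that $\|u^{(m)}\|_\infty\le r$ for $m\le M_0$, that $\Delta t<\min\{\varepsilon_1(q,r,\Delta x),\varepsilon_2(q,r,\Delta x)\}$, and that $\|u^{(M_0+1)}\|_\infty\le qr$. For $\theta>0$ set $\mathcal{E}'^{(m)}=\theta\|e^{(m)}\|^2+\|\delta^+_xe^{(m)}\|^2+A^{(m)}$ with $A^{(m)}=\frac{\alpha}{3\beta}\sum_{k=1}^K(e^{(m)}_k)^3\Delta x$. If $\theta\ge 1+\frac{2qr|\alpha|}{3|\beta|}$, then $0\le\|e^{(m)}\|_{H^1}^2\le\mathcal{E}'^{(m)}$ for $m=0,\dots,M_0+1$.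
   Context: $L>0$, $K\in\mathbb{N}$, $\Delta x=L/K$; $T>0$, $M\in\mathbb{N}$, $\Delta t=T/M$; $\alpha\in\mathbb{R}$, $\beta\ne0$. Grid functions are $K$-periodic real sequences. $\delta^+_x v_k=(v_{k+1}-v_k)/\Delta x$, $\delta^{\langle 1\rangle}_x v_k = (v_{k+1}-v_{k-1})/(2\Delta x)$, $\delta^{\langle 2\rangle}_x v_k = (v_{k+1}-2v_k+v_{k-1})/(\Delta x)^2$, $\|v\|=(\sum_{k=1}^K v_k^2\Delta x)^{1/2}$, $\|v\|_\infty=\max_k|v_k|$, $\|v\|_{H^1}=(\|v\|^2+\|\delta^+_xv\|^2)^{1/2}$; $\delta^+_t v^{(n)}=(v^{(n+1)}-v^{(n)})/\Delta t$, $\mu^+_t v^{(n)}=(v^{(n+1)}+v^{(n)})/2$. The scheme: $u^{(n+1)}$ solves it at step $n$ if $\delta^+_t u^{(n)}_k = -\frac{\alpha}{6}\delta^{\langle 1\rangle}_x\{(u^{(n+1)}_k)^2 + u^{(n+1)}_k u^{(n)}_k + (u^{(n)}_k)^2\} + \beta\delta^{\langle 1\rangle}_x\delta^{\langle 2\rangle}_x \mu^+_t u^{(n)}_k$ for all $k$. $\varepsilon_1(q,r,\Delta x) = (q-1)(\Delta x)^3[\frac{|\alpha|}{6}(\Delta x)^2(q^2+q+1)r + \frac{3}{2}|\beta|(q+1)]^{-1}$, $\varepsilon_2(q,r,\Delta x) = (\Delta x)^3[\frac{|\alpha|}{6}(\Delta x)^2(2q+1)r + \frac{3}{2}|\beta|]^{-1}$.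 $\tilde u^{(m)}_k=u(m\Delta t,k\Delta x)$, $e^{(m)}=u^{(m)}-\tilde u^{(m)}$. *)

(* Defs.v *)
From Stdlib Require Import Reals Lra Lia ZArith List.
From Coquelicot Require Import Coquelicot.
Open Scope R_scope.

Definition grid := Z -> R.

Definition periodic_grid (K : nat) (v : grid) : Prop :=
  forall k : Z, v (k + Z.of_nat K)%Z = v k.

Definition gsum (K : nat) (f : Z -> R) : R :=
  fold_right Rplus 0 (map (fun i => f (Z.of_nat i)) (seq 1 K)).

Definition dxp (dx : R) (v : grid) : grid := fun k => (v (k + 1)%Z - v k) / dx.
Definition dx1 (dx : R) (v : grid) : grid := fun k => (v (k + 1)%Z - v (k - 1)%Z) / (2 * dx).
Definition dx2 (dx : R) (v : grid) : grid :=
  fun k => (v (k + 1)%Z - 2 * v k + v (k - 1)%Z) / (dx ^ 2).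

Definition gnorm (K : nat) (dx : R) (v : grid) : R := sqrt (gsum K (fun k => v k ^ 2 * dx)).
Definition gnorm_inf (K : nat) (v : grid) : R :=
  fold_right Rmax 0 (map (fun i => Rabs (v (Z.of_nat i))) (seq 1 K)).
Definition gnorm_H1 (K : nat) (dx : R) (v : grid) : R :=
  sqrt (gnorm K dx v ^ 2 + gnorm K dx (dxp dx v) ^ 2).

(* w = u^(n+1) solves the scheme at step n, given v = u^(n) *)
Definition scheme_step (alpha beta dx dt : R) (v w : grid) : Prop :=
  forall k : Z,
    (w k - v k) / dt =
      - (alpha / 6) * dx1 dx (fun j => w j ^ 2 + w j * v j + v j ^ 2) k
      + beta * dx1 dx (dx2 dx (fun j => (w j + v j) / 2)) k.

Definition scheme_eps1 (alpha beta q r dx : R) : R :=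
  (q - 1) * dx ^ 3 /
    (Rabs alpha / 6 * dx ^ 2 * (q ^ 2 + q + 1) * r + 3 / 2 * Rabs beta * (q + 1)).
Definition scheme_eps2 (alpha beta q r dx : R) : R :=
  dx ^ 3 / (Rabs alpha / 6 * dx ^ 2 * (2 * q + 1) * r + 3 / 2 * Rabs beta).

Definition kdv_solution (alpha beta L T : R) (u : R -> R -> R) : Prop :=
  (forall t x, 0 <= t <= T -> u t (x + L) = u t x) /\
  (forall t x, 0 <= t <= T -> continuous (fun p : R * R => u (fst p) (snd p)) (t, x)) /\
  (forall t x, 0 < t < T ->
     ex_derive (fun s => u s x) t /\
     ex_derive_n (u t) 3 x /\
     Derive (fun s => u s x) t =
       - alpha * u t x * Derive (u t) x + beta * Derive_n (u t) 3 x).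

Definition energy' (K : nat) (dx alpha beta theta : R) (e : grid) : R :=
  theta * gnorm K dx e ^ 2 + gnorm K dx (dxp dx e) ^ 2
  + alpha / (3 * beta) * gsum K (fun k => e k ^ 3 * dx).

(* Main.v *)
Require Import Defs.
From Stdlib Require Import Reals ZArith List Lra Lia.
From Coquelicot Require Import Coquelicot.
Open Scope R_scope.

Lemma fold_abs_le (h1 h2 : nat -> R) (l : list nat) :
  (forall i, In i l -> Rabs (h1 i) <= h2 i) ->
  Rabs (fold_right Rplus 0 (map h1 l)) <= fold_right Rplus 0 (map h2 l).
Proof.
  induction l as [|a l IH]; simpl; intros H.
  - rewrite Rabs_R0; lra.
  - eapply Rle_trans; [apply Rabs_triang|].
    apply Rplus_le_compat; [apply H; auto| apply IH; intros; apply H; auto].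
Qed.

Lemma gsum_abs_le K (f g : Z -> R) :
  (forall i, (1 <= i <= K)%nat -> Rabs (f (Z.of_nat i)) <= g (Z.of_nat i)) ->
  Rabs (gsum K f) <= gsum K g.
Proof.
  intros H; unfold gsum; apply fold_abs_le.
  intros i Hi; apply in_seq in Hi; apply H; lia.
Qed.

Lemma fold_max_ge (h : nat -> R) (l : list nat) x :
  In x l -> h x <= fold_right Rmax 0 (map h l).
Proof.
  induction l as [|a l IH]; simpl; intros H; [contradiction|].
  destruct H as [->|H]; [apply Rmax_l|].
  eapply Rle_trans; [apply IH; auto| apply Rmax_r].
Qed.

Lemma gnorm_inf_ge K v i : (1 <= i <= K)%nat -> Rabs (v (Z.of_nat i)) <= gnorm_inf K v.
Proof.
  intros H; unfold gnorm_inf.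
  apply (fold_max_ge (fun i => Rabs (v (Z.of_nat i)))).
  apply in_seq; lia.
Qed.

Lemma gsum_nonneg K g : (forall i, (1 <= i <= K)%nat -> 0 <= g (Z.of_nat i)) -> 0 <= gsum K g.
Proof.
  intros H. eapply Rle_trans; [apply Rabs_pos|]. apply gsum_abs_le.
  intros i Hi; rewrite Rabs_pos_eq; [apply Rle_refl| apply H; auto].
Qed.

Theorem lemma3p6
  (L T alpha beta : R) (K M M0 : nat)
  (u : R -> R -> R) (U : nat -> Z -> R) (q r theta : R) :
  0 < L -> (0 < K)%nat -> 0 < T -> beta <> 0 ->
  1 < q -> (M0 < M)%nat ->
  kdv_solution alpha beta L T u ->
  (exists s, s < r /\ forall t x, 0 <= t <= T -> Rabs (u t x) <= s) ->
  let dx := L / INR K in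
  let dt := T / INR M in
  (forall m, (m <= M0 + 1)%nat -> periodic_grid K (U m)) ->
  (forall k : Z, U 0%nat k = u 0 (IZR k * dx)) ->
  (forall n, (n <= M0)%nat -> scheme_step alpha beta dx dt (U n) (U (S n))) ->
  (forall m, (m <= M0)%nat -> gnorm_inf K (U m) <= r) ->
  dt < Rmin (scheme_eps1 alpha beta q r dx) (scheme_eps2 alpha beta q r dx) ->
  gnorm_inf K (U (S M0)) <= q * r ->
  0 < theta ->
  theta >= 1 + 2 * q * r * Rabs alpha / (3 * Rabs beta) ->
  forall m, (m <= M0 + 1)%nat ->
    let e : grid := fun k => U m k - u (INR m * dt) (IZR k * dx) in
    0 <= gnorm_H1 K dx e ^ 2 <= energy' K dx alpha beta theta e.
Proof.
  intros HL HK HT Hb Hq HM _ [s [Hsr Hs]] dx dt _ _ _ Hinf _ HM0 Hth Hth2 m Hm e.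
  assert (Hdx : 0 < dx).
  { unfold dx; apply Rdiv_lt_0_compat; auto; apply lt_0_INR; lia. }
  assert (Hr : 0 < r).
  { assert (H0 := Hs 0 0 ltac:(lra)). pose proof (Rabs_pos (u 0 0)). lra. }
  assert (Ht : 0 <= INR m * dt <= T).
  { unfold dt. assert (0 < INR M) by (apply lt_0_INR; lia).
    assert (INR m <= INR M) by (apply le_INR; lia).
    assert (0 <= INR m) by apply pos_INR.
    split.
    - apply Rmult_le_pos; auto. apply Rlt_le, Rdiv_lt_0_compat; auto.
    - replace (INR m * (T / INR M)) with (T * (INR m / INR M)) by (field; lra).
      assert (INR m / INR M <= 1).
      { apply (Rmult_le_reg_r (INR M)); auto. unfold Rdiv.
        rewrite Rmult_assoc, Rinv_l by lra. lra. }
      nra. }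
  assert (Hpt : forall i, (1 <= i <= K)%nat -> Rabs (e (Z.of_nat i)) <= 2 * q * r).
  { intros i Hi. unfold e.
    assert (HU : Rabs (U m (Z.of_nat i)) <= q * r).
    { eapply Rle_trans; [apply (gnorm_inf_ge K); exact Hi|].
      destruct (Nat.le_gt_cases m M0) as [Hle|Hgt].
      - eapply Rle_trans; [apply Hinf; auto|]. nra.
      - replace m with (S M0) by lia. auto. }
    assert (Hu := Hs (INR m * dt) (IZR (Z.of_nat i) * dx) Ht).
    unfold Rminus; eapply Rle_trans; [apply Rabs_triang|]. rewrite Rabs_Ropp. nra. }
  set (S0 := gsum K (fun k => e k ^ 2 * dx)).
  set (S1 := gsum K (fun k => dxp dx e k ^ 2 * dx)).
  set (S3 := gsum K (fun k => e k ^ 3 * dx)).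
  assert (H0 : 0 <= S0) by (apply gsum_nonneg; intros; apply Rmult_le_pos; nra).
  assert (H1 : 0 <= S1) by (apply gsum_nonneg; intros; apply Rmult_le_pos; nra).
  assert (H3 : Rabs S3 <= 2 * q * r * S0).
  { unfold S3, S0. replace (2 * q * r * gsum K (fun k => e k ^ 2 * dx)) with
      (gsum K (fun k => 2 * q * r * (e k ^ 2 * dx))).
    - apply gsum_abs_le. intros i Hi.
      replace (e (Z.of_nat i) ^ 3 * dx) with (e (Z.of_nat i) * (e (Z.of_nat i) ^ 2 * dx)) by ring.
      rewrite Rabs_mult, (Rabs_right (_ * dx)) by (apply Rle_ge, Rmult_le_pos; nra).
      apply Rmult_le_compat_r; [apply Rmult_le_pos; nra| apply Hpt; auto].
    - unfold gsum. generalize (seq 1 K). induction l as [|a l IHl]; simpl; [ring|]. simpl in IHl. lra. }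
  assert (Hg0 : gnorm K dx e ^ 2 = S0).
  { unfold gnorm; fold S0. simpl. rewrite Rmult_1_r. apply sqrt_sqrt; auto. }
  assert (Hg1 : gnorm K dx (dxp dx e) ^ 2 = S1).
  { unfold gnorm; fold S1. simpl. rewrite Rmult_1_r. apply sqrt_sqrt; auto. }
  assert (HH : gnorm_H1 K dx e ^ 2 = S0 + S1).
  { unfold gnorm_H1. rewrite Hg0, Hg1. simpl. rewrite Rmult_1_r. apply sqrt_sqrt; lra. }
  unfold energy'. rewrite HH, Hg0, Hg1. fold S3.
  split; [lra|].
  assert (Hab : 0 < Rabs beta) by (apply Rabs_pos_lt; auto).
  assert (HA : Rabs (alpha / (3 * beta) * S3) <= (theta - 1) * S0).
  { rewrite Rabs_mult. unfold Rdiv. rewrite Rabs_mult, Rabs_inv, Rabs_mult, (Rabs_right 3) by lra.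
    assert (Hc : 2 * q * r * Rabs alpha / (3 * Rabs beta) <= theta - 1) by lra.
    assert (0 <= Rabs alpha) by apply Rabs_pos.
    apply Rle_trans with (Rabs alpha * / (3 * Rabs beta) * (2 * q * r * S0)).
    - apply Rmult_le_compat_l; auto. apply Rmult_le_pos; auto.
      apply Rlt_le, Rinv_0_lt_compat; lra.
    - replace (Rabs alpha * / (3 * Rabs beta) * (2 * q * r * S0)) with
        (2 * q * r * Rabs alpha / (3 * Rabs beta) * S0) by (field; lra).
      apply Rmult_le_compat_r; auto. }
  pose proof (Rle_abs (- (alpha / (3 * beta) * S3))). rewrite Rabs_Ropp in H. nra.
Qed.
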